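(* Let $\mathcal{R}$ be a finite index set of regions. For each $\ell\in\mathcal{R}$ let $H_\ell\in\mathbb{R}^{N^x_\ell\times N^x_\ell}$ be symmetric, $J_\ell\in\mathbb{R}^{N^{E}_\ell\times N^x_\ell}$, and $A_\ell\in\mathbb{R}^{N^\lambda\times N^x_\ell}$. Set $N^x=\sum_{\ell\in\mathcal{R}}N^x_\ell$, $N^{E}=\sum_{\ell\in\mathcal{R}}N^{E}_\ell$, $H=\mathrm{blkdiag}(H_\ell)_{\ell\in\mathcal{R}}$, $J=\mathrm{blkdiag}(J_\ell)_{\ell\in\mathcal{R}}$, $A=[A_\ell]_{\ell\in\mathcal{R}}$ (horizontal concatenation), and let $$K=\begin{bmatrix} H & J^\top & A^\top\\ J & 0 & 0\\ A & 0 & 0\end{bmatrix}\in\mathbb{R}^{(N^x+N^{E}+N^\lambda)\times(N^x+N^{E}+N^\lambda)}.$$ For each $\ell$ define $\bar H_\ell=\begin{bmatrix} H_\ell & J_\ell^\top\\ J_\ell & 0\end{bmatrix}$ (assumed nonsingular), $\bar A_\ell=\begin{bmatrix} A_\ell & 0\end{bmatrix}$, and the dual Hessian $W=\sum_{\ell\in\mathcal{R}}\bigl(-\bar A_\ell\bar H_\ell^{-1}\bar A_\ell^\top\bigr)\in\mathbb{R}^{N^\lambda\times N^\lambda}$. Suppose the global Jacobian $\bar J=\begin{bmatrix} J\\ A\end{bmatrix}$ has full row rank and $$\mathrm{inertia}(W)=(N^x,\,N^{E}+N^\lambda,\,0)-\sum_{\ell\in\mathcal{R}}\mathrm{inertia}(\bar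 H_\ell)$$ (componentwise). Then $H$ is positive definite on the null space of $\bar J$, and the equality-constrained quadratic program $\min_{\Delta x}\ \tfrac12\Delta x^\top H\Delta x+g^\top\Delta x$ subject to $J\Delta x=r_1$, $A\Delta x=r_2$ (for any given vectors $g,r_1,r_2$ of compatible dimensions) has a strict local minimizer.
   Context: For a symmetric matrix $M$, $\mathrm{inertia}(M)=(n^+,n^-,n^0)$ denotes the numbers of positive, negative and zero eigenvalues of $M$, respectively; inertias are added and subtracted componentwise as triples of integers. *)

(* Defs.v *)
From HB Require Import structures.
From mathcomp Require Import all_boot all_order all_algebra.
From mathcomp Require Import boolp reals.
Set Implicit Arguments. Unset Strict Implicit. Unset Printing Implicit Defensive.
Import Order.TTheory GRing.Theory Num.Theory.
Local Open Scope ring_scope.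

Section Inertia.
Variable R : realType.

(* The eigenvalues of M, listed with algebraic multiplicity: a sequence s
   such that char_poly M = prod_(x <- s) ('X - x).  Such s exists for every
   real symmetric matrix (spectral theorem) and is unique up to permutation
   (unique factorization in {poly R}).  For a matrix whose characteristic
   polynomial does not split over R the value is the junk [::]; inertia is
   only ever applied to symmetric matrices below. *)
Definition eigenvalues_mult n (M : 'M[R]_n) : seq R :=
  match pselect (exists s : seq R, char_poly M = \prod_(x <- s) ('X - x%:P)) with
  | left ex => proj1_sig (cid ex)
  | right _ => [::]
  end.

Definition inertia_pos n (M : 'M[R]_n) : nat := count (fun x => 0 < x) (eigenvalues_mult M).
Definition inertia_neg n (M : 'M[R]_n) : nat := count (fun x => x < 0) (eigenvalues_mult M).
Definition inertia_zero n (M : 'M[R]_n) : nat := count (fun x => x == 0) (eigenvalues_mult M).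

Definition blkdiag_rect r (p q : 'I_r -> nat) (B : forall l, 'M[R]_(p l, q l))
  : 'M[R]_(\sum_(l < r) p l, \sum_(l < r) q l) :=
  \mxblock_(i < r, j < r) (if i == j then conform_mx 0 (B i) else 0).

Definition strict_local_minimizer n (f : 'cV[R]_n -> R) (F : 'cV[R]_n -> Prop)
  (x : 'cV[R]_n) : Prop :=
  F x /\ exists eps : R, 0 < eps /\
    forall y, F y -> y != x -> \sum_(i < n) (y i 0 - x i 0) ^+ 2 < eps ->
      f x < f y.

End Inertia.

(* Main.v *)
Require Import Defs.
From HB Require Import structures.
From mathcomp Require Import all_boot all_order all_algebra.
From mathcomp Require Import boolp reals.
Import Order.TTheory GRing.Theory Num.Theory.
Local Open Scope ring_scope.

From mathcomp Require Import complex lra.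

Section Helpers.
Set Implicit Arguments. Unset Strict Implicit. Unset Printing Implicit Defensive.
Local Open Scope sesquilinear_scope.

Lemma prodXsubC_perm (F : fieldType) (s t : seq F) :
  \prod_(x <- s) ('X - x%:P) = \prod_(x <- t) ('X - x%:P) -> perm_eq s t.
Proof.
elim: s t => [|a s IH] t.
  rewrite big_nil => E; have := congr1 (fun p : {poly F} => size p) E.
  by rewrite size_poly1 size_prod_XsubC; case: (t).
move=> E.
have at_ : a \in t.
  by rewrite -root_prod_XsubC -E root_prod_XsubC mem_head.
have Pt := perm_to_rem at_.
rewrite (perm_big _ Pt) /= !big_cons in E.
have /IH Ps : \prod_(x <- s) ('X - x%:P) = \prod_(x <- rem a t) ('X - x%:P).
  exact: (mulfI (negbT (polyXsubC_eq0 a)) E).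
by rewrite perm_sym; apply: (perm_trans Pt); rewrite perm_cons perm_sym.
Qed.

Lemma char_poly_sim (F : fieldType) n (P D : 'M[F]_n) : P \in unitmx ->
  char_poly (invmx P *m D *m P) = char_poly D.
Proof.
move=> Pu; rewrite /char_poly /char_poly_mx.
have E : ('X%:M : 'M[{poly F}]_n) = map_mx polyC (invmx P) *m 'X%:M *m map_mx polyC P.
  by rewrite mul_mx_scalar -scalemxAl -map_mxM mulVmx // map_mx1 scalemx1.
rewrite {1}E !map_mxM -mulmxBl -mulmxBr !det_mulmx mulrC mulrA -det_mulmx -map_mxM.
by rewrite mulmxV // map_mx1 det1 mul1r.
Qed.

Section Spec.
Variable R : realType.
Local Notation C := R[i].
Local Notation cR := (real_complex R).

Lemma card_index_enum n (S : pred 'I_n) : #|S| = count S (index_enum 'I_n).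
Proof. by rewrite cardE size_filter /index_enum unlock. Qed.

Lemma inertia_pos_spec n (M : 'M[R]_n) (d : 'rV[C]_n) :
  d \is a realmx ->
  char_poly (map_mx cR M) = \prod_(i < n) ('X - (d 0 i)%:P) ->
  inertia_pos M = #|[pred i | 0 < complex.Re (d 0 i)]|.
Proof.
move=> dreal Hc.
set s' := [seq complex.Re (d 0 i) | i <- index_enum 'I_n].
have Hs' : char_poly M = \prod_(x <- s') ('X - x%:P).
  apply: (@map_poly_inj _ _ cR).
  rewrite map_char_poly Hc rmorph_prod big_map /=.
  apply: eq_bigr => i _; rewrite map_polyXsubC /=.
  by rewrite RRe_real // (mxOverP dreal).
rewrite /inertia_pos /eigenvalues_mult.
case: pselect => [ex|nex]; last by exfalso; apply: nex; exists s'.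
case: (cid ex) => s /= Hs.
have /permP -> : perm_eq s s' by apply: prodXsubC_perm; rewrite -Hs.
by rewrite count_map card_index_enum.
Qed.

Lemma pos_space n (M : 'M[R]_n) : M^T = M ->
  exists E : 'M[C]_(inertia_pos M, n), row_free E /\
   forall a : 'rV_(inertia_pos M),
     0 <= (a *m E *m map_mx cR M *m (a *m E)^t*) 0 0 /\
     (a != 0 -> 0 < (a *m E *m map_mx cR M *m (a *m E)^t*) 0 0).
Proof.
move=> Msym; set Mc := map_mx cR M.
have Mcsym : Mc \is symmetricmx.
  apply/is_hermitianmxP; rewrite expr0 scale1r map_mx_id //.
  by rewrite /Mc map_trmx Msym.
have Mcreal : Mc \is a realmx.
  by apply/mxOverP => i j; rewrite mxE /= complex_real.
have Mn : Mc \is normalmx by apply: symmetric_normalmx.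
set P := spectralmx Mc; set d := spectral_diag Mc.
have HM : Mc = invmx P *m diag_mx d *m P by apply/orthomx_spectralP.
have dreal : d \is a realmx.
  exact: hermitian_spectral_diag_real (realsym_hermsym Mcsym Mcreal).
have Hc : char_poly Mc = \prod_(i < n) ('X - (d 0 i)%:P).
  rewrite HM char_poly_sim ?spectral_unit // char_poly_trig ?diag_mx_is_trig //.
  by apply: eq_bigr => i _; rewrite mxE eqxx mulr1n.
rewrite (inertia_pos_spec dreal Hc).
set S := [pred i | 0 < complex.Re (d 0 i)].
pose f : 'I_#|S| -> 'I_n := enum_val.
have Pu : P \is unitarymx by apply: spectral_unitarymx.
have bE : forall (a : 'rV[C]_#|S|) i,
    (a *m rowsub f 1%:M) 0 i = \sum_k a 0 k * (f k == i)%:R.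
  by move=> a i; rewrite !mxE; apply: eq_bigr => k _; rewrite !mxE.
have bS : forall (a : 'rV[C]_#|S|) i, i \notin S -> (a *m rowsub f 1%:M) 0 i = 0.
  move=> a i iS; rewrite bE big1 // => k _.
  have : f k \in S by apply: enum_valP.
  by case: eqP => [->|]; [rewrite (negbTE iS) | rewrite mulr0].
have bf : forall (a : 'rV[C]_#|S|) k, (a *m rowsub f 1%:M) 0 (f k) = a 0 k.
  move=> a k; rewrite bE (bigD1 k) //= eqxx mulr1 big1 ?addr0 // => k' nk.
  by rewrite (inj_eq enum_val_inj) (negbTE nk) mulr0.
have dpos : forall i, i \in S -> 0 < d 0 i.
  move=> i iS; rewrite -(RRe_real (mxOverP dreal 0 i)).
  by rewrite ltcR.
exists (rowsub f P); split.
  apply/inj_row_free => a; rewrite rowsubE mulmxA.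
  move=> /(congr1 (fun X => X *m P^t*)); rewrite mulmxtVK // mul0mx => hb.
  by apply/rowP => k; rewrite mxE -(bf a k) hb mxE.
move=> a; rewrite rowsubE mulmxA; set b := a *m rowsub f 1%:M.
have -> : (b *m P *m Mc *m (b *m P)^t*) 0 0 =
          \sum_i d 0 i * (b 0 i * (b 0 i)^*).
  rewrite HM invmx_unitary // trmx_mul map_mxM !mulmxA !mulmxtVK //.
  rewrite mxE; apply: eq_bigr => i _; rewrite mul_mx_diag !mxE.
  by rewrite mulrAC mulrC.
have tge0 : forall i, 0 <= d 0 i * (b 0 i * (b 0 i)^*).
  move=> i; case: (boolP (i \in S)) => iS.
    by apply: mulr_ge0; [exact: ltW (dpos i iS) | exact: mul_conjC_ge0].
  by rewrite /b bS // mul0r mulr0.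
split; first by apply: sumr_ge0.
move=> /rV0Pn [k ak].
rewrite (bigD1 (f k)) //=; apply: ltr_wpDr; first by apply: sumr_ge0.
rewrite mulr_gt0 ?dpos ?enum_valP //.
by rewrite mul_conjC_gt0 /b bf.
Qed.

End Spec.



Section CAlg.
Variable C : numClosedFieldType.

Lemma tcM m n p (A : 'M[C]_(m, n)) (B : 'M[C]_(n, p)) : (A *m B)^t* = B^t* *m A^t*.
Proof. by rewrite trmx_mul map_mxM. Qed.

Lemma tcB m n (A B : 'M[C]_(m, n)) : (A - B)^t* = A^t* - B^t*.
Proof. by rewrite linearB /= map_mxB. Qed.

Lemma tcZ m n (a : C) (A : 'M[C]_(m, n)) : (a *: A)^t* = a^* *: A^t*.
Proof. by apply/matrixP => i j; rewrite !mxE rmorphM. Qed.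

Lemma zmod_id (V : zmodType) (a p q r t : V) :
  (a - p) - (q - r) + (q - t) + (p - r) = a - t.
Proof.
rewrite opprB !addrA subrK.
rewrite -[a - p + r - t + p]addrAC -[a - p + r + p]addrAC subrK.
by rewrite addrAC addrK.
Qed.

Lemma Q_P n m (Hm Iv : 'M[C]_n) (Ab : 'M[C]_(m, n)) (w : 'rV_n) (mu : 'rV_m) :
  Iv *m Hm = 1%:M -> Hm *m Iv = 1%:M -> Iv^t* = Iv ->
  (w - mu *m Ab *m Iv) *m Hm *m (w - mu *m Ab *m Iv)^t*
  + mu *m Ab *m (w - mu *m Ab *m Iv)^t* + (w - mu *m Ab *m Iv) *m (mu *m Ab)^t*
  = w *m Hm *m w^t* - mu *m (Ab *m Iv *m Ab^t*) *m mu^t*.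
Proof.
move=> IH HI Ict.
set X := mu *m Ab *m Iv; set Y := mu *m Ab.
have XH : X *m Hm = Y by rewrite /X -mulmxA IH mulmx1.
have HX : Hm *m X^t* = Y^t* by rewrite /X tcM Ict mulmxA HI mul1mx.
have -> : mu *m (Ab *m Iv *m Ab^t*) *m mu^t* = Y *m X^t*.
  by rewrite /X /Y !tcM Ict !mulmxA.
have e : X *m Y^t* = Y *m X^t* by rewrite -HX mulmxA XH.
rewrite tcB !mulmxBl !mulmxBr XH -[w *m Hm *m X^t*]mulmxA HX e.
exact: zmod_id.
Qed.

Lemma Q_S nx ne m (Hm : 'M[C]_nx) (Jm : 'M[C]_(ne, nx)) (Am : 'M[C]_(m, nx))
  (t : C) (v : 'rV_nx) (y : 'rV_ne) (mu : 'rV_m) :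
  Jm *m v^t* = 0 -> v *m Jm^T = 0 ->
  row_mx (t *: v) y *m block_mx Hm Jm^T Jm 0 *m (row_mx (t *: v) y)^t*
  + mu *m row_mx Am 0 *m (row_mx (t *: v) y)^t*
  + row_mx (t *: v) y *m (mu *m row_mx Am 0)^t*
  = (t * t^*) *: (v *m Hm *m v^t*) + t^* *: (mu *m Am *m v^t*)
    + t *: (v *m (mu *m Am)^t*).
Proof.
move=> hJ hJ'.
rewrite !tr_row_mx !map_col_mx tcZ mul_row_block mul_mx_row !mulmx0.
rewrite !tr_row_mx !map_col_mx trmx0 map_mx0 !mul_row_col !mulmx0 !addr0.
rewrite -!scalemxAl -scalemxAr hJ'.
rewrite (@mul0mx _ 1 ne 1) scaler0 !addr0 mulmxDl -scalemxAl.
rewrite -[y *m Jm *m _]mulmxA hJ mulmx0 addr0 -scalemxAr scalerA.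
by rewrite [t^* * t]mulrC.
Qed.
End CAlg.


Definition bdg (V : nmodType) r (p q : 'I_r -> nat) (B : forall l, 'M[V]_(p l, q l))
  : 'M[V]_(\sum_(l < r) p l, \sum_(l < r) q l) :=
  \mxblock_(i < r, j < r) (if i == j then conform_mx 0 (B i) else 0).

Lemma mul_mxrow_bdg (R : pzSemiRingType) r (p q : 'I_r -> nat) m
  (Rw : forall l, 'M[R]_(m, p l)) (B : forall l, 'M[R]_(p l, q l)) :
  \mxrow_l Rw l *m bdg B = \mxrow_l (Rw l *m B l).
Proof.
rewrite mul_mxrow_mxblock; apply: eq_mxrow => j.
rewrite (bigD1 j) //= eqxx conform_mx_id big1 ?addr0 // => i /negbTE ->.
by rewrite mulmx0.
Qed.

Lemma mul_bdg_mxcol (R : pzSemiRingType) r (p q : 'I_r -> nat) m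
  (B : forall l, 'M[R]_(p l, q l)) (Cc : forall l, 'M[R]_(q l, m)) :
  bdg B *m \mxcol_l Cc l = \mxcol_l (B l *m Cc l).
Proof.
rewrite mul_mxblock_mxrow; apply: eq_mxcol => i.
rewrite (bigD1 i) //= eqxx conform_mx_id big1 ?addr0 // => j.
by rewrite eq_sym => /negbTE ->; rewrite mul0mx.
Qed.

Lemma scale_mxrow (R : pzRingType) r (q : 'I_r -> nat) m (c : R)
  (B : forall l, 'M[R]_(m, q l)) : c *: \mxrow_l B l = \mxrow_l (c *: B l).
Proof. by apply/matrixP => i j; rewrite !mxE. Qed.

Lemma map_mxrow (R S : Type) (f : R -> S) r (q : 'I_r -> nat) m
  (B : forall l, 'M[R]_(m, q l)) : map_mx f (\mxrow_l B l) = \mxrow_l map_mx f (B l).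
Proof. by apply/matrixP => i j; rewrite !mxE. Qed.


Lemma core (C : numClosedFieldType) r (Nx NE : 'I_r -> nat) (Nlam : nat)
  (Hc : forall l, 'M[C]_(Nx l)) (Jc : forall l, 'M[C]_(NE l, Nx l))
  (Ac : forall l, 'M[C]_(Nlam, Nx l)) (Ivc : forall l, 'M[C]_(Nx l + NE l))
  (pl : 'I_r -> nat) (El : forall l, 'M[C]_(pl l, Nx l + NE l))
  (pW : nat) (EW : 'M[C]_(pW, Nlam)) (v : forall l, 'rV[C]_(Nx l)) :
  let Hbc l := block_mx (Hc l) (Jc l)^T (Jc l) 0 in
  let Abc l := row_mx (Ac l) (0 : 'M_(Nlam, NE l)) in
  (forall l, Ivc l *m Hbc l = 1%:M) -> (forall l, Hbc l *m Ivc l = 1%:M) ->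
  (forall l, (Ivc l)^t* = Ivc l) ->
  (forall l (a : 'rV_(pl l)), 0 <= (a *m El l *m Hbc l *m (a *m El l)^t*) 0 0 /\
               (a != 0 -> 0 < (a *m El l *m Hbc l *m (a *m El l)^t*) 0 0)) ->
  (forall a : 'rV_pW, let Wc := \sum_l - (Abc l *m Ivc l *m (Abc l)^t*) in
       0 <= (a *m EW *m Wc *m (a *m EW)^t*) 0 0 /\
       (a != 0 -> 0 < (a *m EW *m Wc *m (a *m EW)^t*) 0 0)) ->
  (pW + \sum_l pl l = \sum_l Nx l)%N ->
  (forall l, Jc l *m (v l)^t* = 0) -> (forall l, v l *m (Jc l)^T = 0) ->
  \sum_l Ac l *m (v l)^t* = 0 -> \sum_l v l *m (Ac l)^t* = 0 ->
  (exists l, v l != 0) ->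
  \sum_l (v l *m Hc l *m (v l)^t*) 0 0 <= 0 -> False.
Proof.
move=> Hbc Abc IH HI Ict Epos EWpos Hdim hJ hJ' hA hA' [l0 vl0] Sle.
set SX := (\sum_l Nx l)%N; set P := (\sum_l pl l)%N.
pose Pl l : 'M[C]_(Nx l + NE l, Nx l) := col_mx 1%:M 0.
pose F1 : 'M[C]_(P, SX) := bdg (fun l => El l *m Pl l).
pose F2 : 'M[C]_(pW, SX) := - \mxrow_l (EW *m Abc l *m Ivc l *m Pl l).
pose vr : 'rV[C]_SX := \mxrow_l v l.
pose F : 'M[C]_(P + pW + 1, SX) := col_mx (col_mx F1 F2) (- vr).
have nfree : ~~ row_free F.
  apply/negP; rewrite /row_free => /eqP h.
  have := rank_leq_col F; rewrite h /SX -Hdim addn1 addnC ltnn //.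
move: nfree; rewrite -kermx_eq0 => /rowV0Pn [th /sub_kermxP thF thnz].
set A := lsubmx (lsubmx th); set b := rsubmx (lsubmx th); set t := rsubmx th.
have thE : th = row_mx (row_mx A b) t by rewrite !hsubmxK.
pose a l := submxrow A l.
have AE : A = \mxrow_l a l by rewrite submxrowK.
set t0 := t 0 0.
pose mu := b *m EW. pose w l := a l *m El l.
pose z l := w l - mu *m Abc l *m Ivc l.
have zP : forall l, z l *m Pl l = lsubmx (z l).
  by move=> l; rewrite -{1}(hsubmxK (z l)) mul_row_col mulmx1 mulmx0 addr0.
have eqx : \mxrow_l (z l *m Pl l) = t0 *: vr.
  move: thF; rewrite thE /F !mul_row_col AE mul_mxrow_bdg /F2 mulmxN mul_mxrow.
  rewrite [t]mx11_scalar mulmxN mul_scalar_mx -/t0.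
  move/eqP; rewrite subr_eq0 => /eqP <-.
  rewrite -mxrowB; apply: eq_mxrow => l.
  by rewrite /z /w /mu mulmxBl !mulmxA.
have zl : forall l, lsubmx (z l) = t0 *: v l.
  move=> l; rewrite -zP; have := congr1 (fun M => submxrow M l) eqx.
  by rewrite /= mxrowK /vr scale_mxrow mxrowK.
have zE : forall l, z l = row_mx (t0 *: v l) (rsubmx (z l)).
  by move=> l; rewrite -zl hsubmxK.
pose Q l := z l *m Hbc l *m (z l)^t* + mu *m Abc l *m (z l)^t*
            + z l *m (mu *m Abc l)^t*.
have QP : forall l, Q l = w l *m Hbc l *m (w l)^t*
                       - mu *m (Abc l *m Ivc l *m (Abc l)^t*) *m mu^t*.
  by move=> l; apply: Q_P.
have QS : forall l, Q l = (t0 * t0^*) *: (v l *m Hc l *m (v l)^t*)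
     + t0^* *: (mu *m Ac l *m (v l)^t*) + t0 *: (v l *m (mu *m Ac l)^t*).
  by move=> l; rewrite /Q zE; apply: Q_S.
have e00 : forall X Y : 'M[C]_1, (X + Y) 0 0 = X 0 0 + Y 0 0.
  by move=> X Y; rewrite mxE.
set Wc := \sum_l - (Abc l *m Ivc l *m (Abc l)^t*).
have sumP : \sum_l Q l = \sum_l (w l *m Hbc l *m (w l)^t*) + mu *m Wc *m mu^t*.
  rewrite (eq_bigr _ (fun l _ => QP l)) sumrB /Wc mulmx_sumr mulmx_suml.
  by rewrite -sumrN; congr (_ + _); apply: eq_bigr => l _; rewrite mulmxN mulNmx.
have sumS : \sum_l Q l = (t0 * t0^*) *: \sum_l (v l *m Hc l *m (v l)^t*).
  rewrite (eq_bigr _ (fun l _ => QS l)) !big_split /= -!scaler_sumr.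
  have -> : \sum_l (mu *m Ac l *m (v l)^t*) = 0.
    by under eq_bigr do rewrite -mulmxA; rewrite -mulmx_sumr hA mulmx0.
  have -> : \sum_l (v l *m (mu *m Ac l)^t*) = 0.
    by under eq_bigr do rewrite tcM mulmxA; rewrite -mulmx_suml hA' mul0mx.
  by rewrite !scaler0 !addr0.
have Qle : (\sum_l Q l) 0 0 <= 0.
  rewrite sumS mxE summxE; apply: mulr_ge0_le0 => //; exact: mul_conjC_ge0.
have QE : (\sum_l Q l) 0 0 = \sum_l (w l *m Hbc l *m (w l)^t*) 0 0
                              + (mu *m Wc *m mu^t*) 0 0.
  by rewrite sumP e00 summxE.
have Tge : forall l, 0 <= (w l *m Hbc l *m (w l)^t*) 0 0.
  by move=> l; exact: (Epos l (a l)).1.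
have TWge : 0 <= (mu *m Wc *m mu^t*) 0 0 by exact: (EWpos b).1.
have a0 : forall l, a l = 0.
  move=> l; apply/eqP; apply/negPn/negP => anz.
  have Tl := (Epos l (a l)).2 anz.
  have : 0 < (\sum_l Q l) 0 0.
    rewrite QE (bigD1 l) //=; apply: ltr_wpDr => //.
    by apply: ltr_wpDr => //; apply: sumr_ge0 => i _.
  by move=> /lt_le_trans /(_ Qle); rewrite ltxx.
have b0 : b = 0.
  apply/eqP; apply/negPn/negP => bnz.
  have TW := (EWpos b).2 bnz.
  have : 0 < (\sum_l Q l) 0 0.
    by rewrite QE; apply: ltr_wpDl => //; apply: sumr_ge0 => i _.
  by move=> /lt_le_trans /(_ Qle); rewrite ltxx.
have z0 : forall l, z l = 0.
  by move=> l; rewrite /z /w /mu a0 b0 !mul0mx subr0.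
have t00 : t0 = 0.
  have := zl l0; rewrite z0 linear0 => /esym/eqP.
  by rewrite scaler_eq0 (negbTE vl0) orbF => /eqP.
have A0 : A = 0 by rewrite AE; under eq_mxrow do rewrite a0; rewrite mxrow0.
have t0' : t = 0 by rewrite [t]mx11_scalar -/t0 t00 raddf0.
by move: thnz; rewrite thE A0 b0 t0' !row_mx0 eqxx.
Qed.


Section Aux.
Variable R : realType.
Local Notation cR := (real_complex R).

Lemma tc_mc m n (M : 'M[R]_(m, n)) : (map_mx cR M)^t* = map_mx cR (M^T).
Proof.
apply/matrixP => i j; rewrite !mxE; apply: conj_Creal.
by rewrite /= complex_real.
Qed.

Lemma mcM m n p (A : 'M[R]_(m, n)) (B : 'M[R]_(n, p)) :
  map_mx cR A *m map_mx cR B = map_mx cR (A *m B).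
Proof. by rewrite map_mxM. Qed.

Lemma blk_bdg r (p q : 'I_r -> nat) (B : forall l, 'M[R]_(p l, q l)) :
  blkdiag_rect B = bdg B.
Proof. by []. Qed.
End Aux.

Local Notation cR := (real_complex _).

Lemma claim1_core (R : realType) (r : nat) (Nx NE : 'I_r -> nat) (Nlam : nat)
  (Hl : forall l, 'M[R]_(Nx l)) (Jl : forall l, 'M[R]_(NE l, Nx l))
  (Al : forall l, 'M[R]_(Nlam, Nx l)) :
  (forall l, (Hl l)^T = Hl l) ->
  let H : 'M[R]_(\sum_(l < r) Nx l) := \mxdiag_(l < r) Hl l in
  let J : 'M[R]_(\sum_(l < r) NE l, \sum_(l < r) Nx l) := blkdiag_rect Jl in
  let A : 'M[R]_(Nlam, \sum_(l < r) Nx l) := \mxrow_(l < r) Al l in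
  let Hbar l : 'M[R]_(Nx l + NE l) := block_mx (Hl l) (Jl l)^T (Jl l) 0 in
  let Abar l : 'M[R]_(Nlam, Nx l + NE l) := row_mx (Al l) 0 in
  let W : 'M[R]_Nlam := \sum_(l < r) - (Abar l *m invmx (Hbar l) *m (Abar l)^T) in
  let Jbar := col_mx J A in
  (forall l, Hbar l \in unitmx) ->
  (inertia_pos W)%:Z = (\sum_(l < r) Nx l)%:Z - \sum_(l < r) (inertia_pos (Hbar l))%:Z ->
  (forall v : 'cV[R]_(\sum_(l < r) Nx l), Jbar *m v = 0 -> v != 0 ->
      0 < (v^T *m H *m v) 0 0).
Proof.
move=> Hsym H J A Hb Ab W Jbar Hunit Hpos v Jv vnz.
rewrite ltNge; apply/negP => hle.
pose vl l := submxcol v l.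
have vE : v = \mxcol_l vl l by rewrite submxcolK.
move: Jv; rewrite /Jbar mul_col_mx => /eqP; rewrite col_mx_eq0.
move=> /andP [/eqP Jv0 /eqP Av0].
have Jl0 : forall l, Jl l *m vl l = 0.
  move=> l; have := congr1 (fun M => submxcol M l) Jv0.
  by rewrite /= {1}vE /J blk_bdg mul_bdg_mxcol mxcolK submxcol0.
have Asum : \sum_l Al l *m vl l = 0 by rewrite -mul_mxrow_mxcol -vE.
have Hq : (v^T *m H *m v) 0 0 = \sum_l ((vl l)^T *m Hl l *m vl l) 0 0.
  by rewrite {1 2}vE tr_mxcol /H mul_mxrow_mxdiag mul_mxrow_mxcol summxE.
have [l0 vl0] : exists l, vl l != 0.
  case: (pselect (exists l, vl l != 0)) => // nex; exfalso.
  have h0 : forall l, vl l = 0.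
    by move=> l; apply/eqP; apply/negPn/negP => h; apply: nex; exists l.
  by move: vnz; rewrite vE (eq_mxcol h0) mxcol0 eqxx.
have Hbsym : forall l, (Hb l)^T = Hb l.
  by move=> l; rewrite /Hb tr_block_mx trmxK Hsym trmx0.
have Invsym : forall l, (invmx (Hb l))^T = invmx (Hb l).
  by move=> l; rewrite trmx_inv Hbsym.
have Wsym : W^T = W.
  rewrite /W linear_sum /=; apply: eq_bigr => l _.
  by rewrite linearN /= !trmx_mul trmxK Invsym mulmxA.
pose El l := proj1_sig (cid (pos_space (Hbsym l))).
have ElP := fun l => proj2_sig (cid (pos_space (Hbsym l))).
pose EW := proj1_sig (cid (pos_space Wsym)).
have EWP := proj2_sig (cid (pos_space Wsym)).
have hbc : forall l, map_mx cR (Hb l) =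
    block_mx (map_mx cR (Hl l)) (map_mx cR (Jl l))^T (map_mx cR (Jl l)) 0.
  by move=> l; rewrite map_block_mx map_trmx map_mx0.
have hab : forall l, map_mx cR (Ab l) = row_mx (map_mx cR (Al l)) 0.
  by move=> l; rewrite map_row_mx map_mx0.
apply: (@core (R[i]) r Nx NE Nlam (fun l => map_mx cR (Hl l))
  (fun l => map_mx cR (Jl l)) (fun l => map_mx cR (Al l))
  (fun l => map_mx cR (invmx (Hb l))) (fun l => inertia_pos (Hb l)) El
  (inertia_pos W) EW (fun l => map_mx cR (vl l)^T)).
- by move=> l; rewrite -hbc mcM mulVmx ?Hunit // map_mx1.
- by move=> l; rewrite -hbc mcM mulmxV ?Hunit // map_mx1.
- by move=> l; rewrite tc_mc Invsym.
- by move=> l a; rewrite -hbc; exact: (proj2 (ElP l) a).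
- move=> a Wc.
  have eW : map_mx cR W = Wc.
    rewrite /Wc /W raddf_sum; apply: eq_bigr => l _.
    by rewrite raddfN /= !map_mxM -hab tc_mc.
  rewrite -eW; exact: (proj2 EWP a).
- move: Hpos; rewrite -(big_morph Posz PoszD (erefl _)) => Hp.
  apply/eqP; rewrite -eqz_nat PoszD Hp; apply/eqP.
  exact: subrK.
- by move=> l; rewrite tc_mc trmxK mcM Jl0 map_mx0.
- by move=> l; rewrite -map_trmx -trmx_mul mcM Jl0 map_mx0 trmx0.
- under eq_bigr do rewrite tc_mc trmxK mcM.
  by rewrite -raddf_sum /= Asum map_mx0.
- under eq_bigr do rewrite tc_mc mcM -trmx_mul.
  by rewrite -raddf_sum /= -linear_sum /= Asum trmx0 map_mx0.
- by exists l0; rewrite map_mx_eq0 trmx_eq0.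
have e : forall l, (map_mx cR (vl l)^T *m map_mx cR (Hl l) *m
     (map_mx cR (vl l)^T)^t*) 0 0 = cR (((vl l)^T *m Hl l *m vl l) 0 0).
  by move=> l; rewrite tc_mc trmxK -!map_mxM mxE.
under eq_bigr do rewrite e.
by rewrite -rmorph_sum -Hq -(rmorph0 cR) lecR.
Qed.

Lemma e00 (R : pzRingType) (X Y : 'M[R]_1) : (X + Y) 0 0 = X 0 0 + Y 0 0.
Proof. by rewrite mxE. Qed.
Lemma eN00 (R : pzRingType) (X : 'M[R]_1) : (- X) 0 0 = - X 0 0.
Proof. by rewrite mxE. Qed.


End Helpers.

Theorem corollary1 (R : realType) (r : nat) (Nx NE : 'I_r -> nat) (Nlam : nat)
  (Hl : forall l, 'M[R]_(Nx l)) (Jl : forall l, 'M[R]_(NE l, Nx l))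
  (Al : forall l, 'M[R]_(Nlam, Nx l)) :
  (forall l, (Hl l)^T = Hl l) ->
  let H : 'M[R]_(\sum_(l < r) Nx l) := \mxdiag_(l < r) Hl l in
  let J : 'M[R]_(\sum_(l < r) NE l, \sum_(l < r) Nx l) := blkdiag_rect Jl in
  let A : 'M[R]_(Nlam, \sum_(l < r) Nx l) := \mxrow_(l < r) Al l in
  let Hbar l : 'M[R]_(Nx l + NE l) := block_mx (Hl l) (Jl l)^T (Jl l) 0 in
  let Abar l : 'M[R]_(Nlam, Nx l + NE l) := row_mx (Al l) 0 in
  let W : 'M[R]_Nlam := \sum_(l < r) - (Abar l *m invmx (Hbar l) *m (Abar l)^T) in
  let Jbar := col_mx J A in
  (forall l, Hbar l \in unitmx) ->
  row_free Jbar ->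
  (inertia_pos W)%:Z = (\sum_(l < r) Nx l)%:Z - \sum_(l < r) (inertia_pos (Hbar l))%:Z ->
  (inertia_neg W)%:Z = (\sum_(l < r) NE l + Nlam)%:Z - \sum_(l < r) (inertia_neg (Hbar l))%:Z ->
  (inertia_zero W)%:Z = 0 - \sum_(l < r) (inertia_zero (Hbar l))%:Z ->
  (forall v : 'cV[R]_(\sum_(l < r) Nx l), Jbar *m v = 0 -> v != 0 ->
      0 < (v^T *m H *m v) 0 0) /\
  (forall (g : 'cV[R]_(\sum_(l < r) Nx l)) (r1 : 'cV[R]_(\sum_(l < r) NE l))
          (r2 : 'cV[R]_Nlam),
     exists dx : 'cV[R]_(\sum_(l < r) Nx l),
       strict_local_minimizer
         (fun x => 2^-1 * (x^T *m H *m x) 0 0 + (g^T *m x) 0 0)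
         (fun x => J *m x = r1 /\ A *m x = r2) dx).

Proof.
move=> Hsym H J A Hb Ab W Jbar Hunit Jfree Hpos Hneg Hzero.
have claim1 : forall v : 'cV[R]_(\sum_(l < r) Nx l), Jbar *m v = 0 -> v != 0 ->
    0 < (v^T *m H *m v) 0 0 := @claim1_core R r Nx NE Nlam Hl Jl Al Hsym Hunit Hpos.
split; first exact: claim1.
move=> g r1 r2.
have Hs : H^T = H.
  by rewrite /H tr_mxdiag; apply/eq_mxdiagP => l; rewrite Hsym.
pose K := block_mx H Jbar^T Jbar 0.
have Kfree : row_free K.
  apply/inj_row_free => u uK.
  rewrite -(hsubmxK u) in uK *; set x := lsubmx u in uK *; set y := rsubmx u in uK *.
  move: uK; rewrite /K mul_row_block mulmx0 addr0 => /eqP.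
  rewrite row_mx_eq0 => /andP [/eqP e1 /eqP e2].
  have Jx : Jbar *m x^T = 0 by rewrite -[Jbar]trmxK -trmx_mul e2 trmx0.
  have x0 : x = 0.
    apply/eqP; apply/negPn/negP => xnz.
    have := claim1 _ Jx; rewrite trmx_eq0 => /(_ xnz); rewrite trmxK.
    have -> : x *m H *m x^T = 0.
      have -> : x *m H = - (y *m Jbar) by apply/eqP; rewrite -addr_eq0 e1.
      by rewrite mulNmx -mulmxA Jx mulmx0 oppr0.
    by rewrite mxE ltxx.
  have y0 : y = 0.
    by move: e1; rewrite x0 mul0mx add0r => /eqP; rewrite mulmx_free_eq0 // => /eqP.
  by rewrite x0 y0 row_mx0.
have Ku : K \in unitmx by rewrite -row_free_unit.
pose sol := invmx K *m col_mx (- g) (col_mx r1 r2).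
have Ksol : K *m sol = col_mx (- g) (col_mx r1 r2) by rewrite mulKVmx.
set dx := usubmx sol; set lam := dsubmx sol.
move: Ksol; rewrite -(vsubmxK sol) -/dx -/lam /K mul_block_col mul0mx addr0.
move=> /eq_col_mx [e1 e2].
have [Jdx Adx] : J *m dx = r1 /\ A *m dx = r2.
  by move: e2; rewrite /Jbar mul_col_mx => /eq_col_mx.
exists dx; split; first by [].
exists 1; split => // y [Jy Ay] ynx _.
set d := y - dx.
have Jd : Jbar *m d = 0.
  by rewrite mulmxBr e2 /Jbar mul_col_mx Jy Ay subrr.
have dnz : d != 0 by rewrite subr_eq0.
have yE : y = dx + d by rewrite /d addrC subrK.
clearbody d.
have pd := claim1 d Jd dnz.
have q1 : ((dx + d)^T *m H *m (dx + d)) 0 0 =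
    (dx^T *m H *m dx) 0 0 + 2 * (dx^T *m H *m d) 0 0 + (d^T *m H *m d) 0 0.
  have c : (d^T *m H *m dx) 0 0 = (dx^T *m H *m d) 0 0.
    have -> : d^T *m H *m dx = (dx^T *m H *m d)^T.
      by rewrite !trmx_mul trmxK Hs mulmxA.
    by rewrite mxE.
  rewrite [(dx + d)^T]linearD /= !mulmxDl !mulmxDr !e00 c; lra.
have q2 : (dx^T *m H *m d) 0 0 = - (g^T *m d) 0 0.
  have -> : dx^T *m H = (- g - Jbar^T *m lam)^T by rewrite -e1 addrK trmx_mul Hs.
  rewrite linearB /= linearN /= trmx_mul trmxK mulmxBl mulNmx -mulmxA Jd.
  by rewrite mulmx0 subr0 eN00.
rewrite yE [g^T *m (dx + d)]mulmxDr e00 q1 q2; lra.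
Qed.
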